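(* For every real $y\ge0$, $\displaystyle\sum_{k,\ell\in\mathbb{N}}\frac{y^{k\ell}}{(k!)^\ell\,\ell!}<\infty$. Moreover, $\displaystyle\sum_{k,\ell\in\mathbb{N}}\frac{1}{(k!)^\ell\,\ell!}\le e^2$.
   Context: $\mathbb{N}=\{1,2,3,\dots\}$. *)

(* Defs.v *)
From Stdlib Require Import Reals Factorial.
Open Scope R_scope.

(* Term of the double series, for k, l in N = {1,2,3,...}:
   y^(k l) / ((k!)^l * l!). *)
Definition dterm (y : R) (k l : nat) : R :=
  y ^ (k * l) / ((INR (fact k)) ^ l * INR (fact l)).

(* Finite partial sum over the square 1 <= k <= N, 1 <= l <= N.
   sum_f_R0 f n = f 0 + ... + f n, so we shift indices by one. *)
Definition dpartial (y : R) (N : nat) : R :=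
  match N with
  | O => 0
  | S n => sum_f_R0 (fun i => sum_f_R0 (fun j => dterm y (S i) (S j)) n) n
  end.

(* Main.v *)
Require Import Defs.
From Stdlib Require Import Reals.
From Stdlib Require Import Lra Lia Factorial.
Open Scope R_scope.

Lemma fact_pos (k : nat) : 0 < INR (fact k).
Proof. apply lt_0_INR, lt_O_fact. Qed.

Lemma expsum_le (x : R) (n : nat) : 0 <= x ->
  sum_f_R0 (fun i => x ^ i / INR (fact i)) n <= exp x.
Proof.
  intros Hx.
  unfold exp; destruct (exist_exp x) as [l Hl]; simpl.
  unfold exp_in, infinite_sum in Hl.
  assert (E : forall m, sum_f_R0 (fun i => x ^ i / INR (fact i)) m
                    = sum_f_R0 (fun i => / INR (fact i) * x ^ i) m).
  { intro m; apply sum_eq; intros; unfold Rdiv; ring. }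
  rewrite E.
  apply (growing_ineq (fun m => sum_f_R0 (fun i => / INR (fact i) * x ^ i) m)).
  - intro m; rewrite tech5. assert (0 <= / INR (fact (S m)) * x ^ S m).
    { apply Rmult_le_pos; [left; apply Rinv_0_lt_compat, fact_pos | apply pow_le; lra]. }
    lra.
  - intros eps Heps; destruct (Hl eps Heps) as [N HN]; exists N; intros m Hm.
    apply (HN m Hm).
Qed.

Lemma term_le_exp (x : R) (k : nat) : 0 <= x -> x ^ k / INR (fact k) <= exp x.
Proof.
  intros Hx. eapply Rle_trans; [|apply (expsum_le x k Hx)].
  destruct k as [|k]; simpl.
  - lra.
  - assert (0 <= sum_f_R0 (fun i => x ^ i / INR (fact i)) k).
    { apply cond_pos_sum; intro i; apply Rmult_le_pos; [apply pow_le; lra|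
        left; apply Rinv_0_lt_compat, fact_pos]. }
    simpl in H; lra.
Qed.

Lemma shifted_le (x : R) (n : nat) : 0 <= x ->
  sum_f_R0 (fun i => x ^ S i / INR (fact (S i))) n <= exp x.
Proof.
  intros Hx. eapply Rle_trans; [|apply (expsum_le x (S n) Hx)].
  rewrite (decomp_sum _ (S n)) by lia. simpl pred.
  simpl (x ^ 0). simpl (INR (fact 0)). lra.
Qed.

Lemma dterm_le (y B : R) (k l : nat) : 0 <= y -> 1 <= B ->
  y ^ S k / INR (fact (S k)) <= B ->
  dterm y (S k) (S l) <= (y ^ S k / INR (fact (S k))) * (B ^ S l / INR (fact (S l))).
Proof.
  intros Hy HB Ha. unfold dterm.
  set (a := y ^ S k / INR (fact (S k))) in *.
  assert (Ha0 : 0 <= a).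
  { unfold a; apply Rmult_le_pos; [apply pow_le; lra| left; apply Rinv_0_lt_compat, fact_pos]. }
  assert (Eq : y ^ (S k * S l) / (INR (fact (S k)) ^ S l * INR (fact (S l)))
              = a ^ S l / INR (fact (S l))).
  { rewrite pow_mult. unfold a, Rdiv. rewrite Rpow_mult_distr, pow_inv.
    rewrite Rinv_mult. ring. }
  rewrite Eq. unfold Rdiv. rewrite <- Rmult_assoc.
  apply Rmult_le_compat_r; [left; apply Rinv_0_lt_compat, fact_pos|].
  simpl (a ^ S l). simpl (B ^ S l).
  apply Rmult_le_compat_l; [exact Ha0|].
  apply Rle_trans with (B ^ l).
  - apply pow_incr; lra.
  - assert (0 <= B ^ l) by (apply pow_le; lra). nra.
Qed.

Lemma dpartial_bound (y B : R) (N : nat) : 0 <= y -> 1 <= B ->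
  (forall k, y ^ k / INR (fact k) <= B) ->
  dpartial y N <= exp y * exp B.
Proof.
  intros Hy HB Hk.
  assert (0 < exp y) by apply exp_pos. assert (0 < exp B) by apply exp_pos.
  destruct N as [|n]; simpl dpartial.
  - nra.
  - set (a := fun i => y ^ S i / INR (fact (S i))).
    set (b := fun j => B ^ S j / INR (fact (S j))).
    apply Rle_trans with (sum_f_R0 (fun i => sum_f_R0 (fun j => a i * b j) n) n).
    + apply sum_Rle; intros i _. apply sum_Rle; intros j _.
      apply dterm_le; auto.
    + apply Rle_trans with (sum_f_R0 a n * sum_f_R0 b n).
      * right. rewrite Rmult_comm, scal_sum. apply sum_eq; intros i _.
        rewrite scal_sum. apply sum_eq; intros; ring.
      * apply Rmult_le_compat.
        -- apply cond_pos_sum; intro i; unfold a; apply Rmult_le_pos;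
             [apply pow_le; lra| left; apply Rinv_0_lt_compat, fact_pos].
        -- apply cond_pos_sum; intro i; unfold b; apply Rmult_le_pos;
             [apply pow_le; lra| left; apply Rinv_0_lt_compat, fact_pos].
        -- apply shifted_le; lra.
        -- apply shifted_le; lra.
Qed.

(* Terms are nonnegative, so the double sum over N x N is the supremum of the
   partial sums over the cofinal family of squares [1,N]^2. *)
Theorem lemma6p1 :
  (forall y : R, 0 <= y -> exists M : R, forall N : nat, dpartial y N <= M) /\
  (forall N : nat, dpartial 1 N <= exp 2).
Proof.
  split.
  - intros y Hy. exists (exp y * exp (Rmax 1 (exp y))). intro N.
    apply dpartial_bound; auto.
    + apply Rmax_l.
    + intro k. eapply Rle_trans; [apply term_le_exp; auto| apply Rmax_r].
  - intro N. replace 2 with (1 + 1) by lra. rewrite exp_plus.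
    apply dpartial_bound; try lra.
    intro k. rewrite pow1. unfold Rdiv. rewrite Rmult_1_l.
    assert (H := fact_pos k). assert (1 <= INR (fact k)).
    { change 1 with (INR 1). apply le_INR. pose proof (lt_O_fact k). lia. }
    rewrite <- Rinv_1. apply Rinv_le_contravar; lra.
Qed.
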